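(* Let $\gamma>0$, $\lambda_k\coloneqq-\gamma+ik$ for $k\in\mathbb{N}$, and let $A$ be the diagonal operator on $\ell^2$ given by $A(\zeta_k)=(\lambda_k\zeta_k)$ with domain $D(A)=\{(\zeta_k)\in\ell^2:(\lambda_k\zeta_k)\in\ell^2\}$. Let $A_d\coloneqq(I+A)(I-A)^{-1}$. Then for every $0<\alpha\le1$, \[ \liminf_{n\to\infty}n^{\alpha}\big\|A_d^{\,n^2}(-A)^{-\alpha}\big\|\ge e^{-2\gamma}, \] and moreover there exist $M>0$ and $n_0\in\mathbb{N}$ such that $\|A_d^{\,n}A^{-1}\|\le M/\sqrt{n}$ for all $n\ge n_0$.
   Context: For this diagonal operator, $A_d^{\,n}(-A)^{-\alpha}$ is the diagonal operator with entries $\big(\frac{1+\lambda_k}{1-\lambda_k}\big)^n(-\lambda_k)^{-\alpha}$ (principal branch). *)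

(* Defs.v *)
From HB Require Import structures.
From mathcomp Require Import all_boot all_order all_algebra.
From mathcomp Require Import all_classical all_reals all_analysis.
From mathcomp Require Import complex.
Set Implicit Arguments. Unset Strict Implicit. Unset Printing Implicit Defensive.
Import Order.TTheory GRing.Theory Num.Theory.
Local Open Scope ring_scope.
Local Open Scope complex_scope.

Section Defs.
Variable R : realType.

Definition cmod (z : R[i]) : R := let: a +i* b := z in Num.sqrt (a ^+ 2 + b ^+ 2).

(* principal argument in (-pi, pi] (atan2) *)
Definition carg (z : R[i]) : R :=
  let: x +i* y := z in
  if 0 < x then atan (y / x)
  else if x < 0 then (if 0 <= y then atan (y / x) + pi else atan (y / x) - pi)
  else if 0 < y then pi / 2 else if y < 0 then - (pi / 2) else 0.

(* principal branch power z^s = exp(s Log z), s real, z <> 0 (0 for z = 0) *)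
Definition cpow (z : R[i]) (s : R) : R[i] :=
  if z == 0 then 0
  else (expR (s * ln (cmod z)))%:C *
       ((cos (s * carg z))%:C + 'i * (sin (s * carg z))%:C).

Definition l2sq (x : nat -> R[i]) : \bar R :=
  (\sum_(0 <= k <oo) ((cmod (x k)) ^+ 2)%:E)%E.

(* l^2 norm (+oo if the sequence is not in l^2) *)
Definition l2norm (x : nat -> R[i]) : \bar R :=
  match l2sq x with
  | EFin r => (Num.sqrt r)%:E
  | _ => +oo%E
  end.

Definition diag_opnorm (d : nat -> R[i]) : \bar R :=
  ereal_sup [set l2norm (fun k => d k * x k) | x in [set x | (l2norm x <= 1%:E)%E]].

Definition lam (gamma : R) (k : nat) : R[i] := (- gamma)%:C + 'i * (k%:R)%:C.

(* eigenvalues of the Cayley transform A_d = (I + A)(I - A)^{-1} *)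
Definition mu (gamma : R) (k : nat) : R[i] := (1 + lam gamma k) / (1 - lam gamma k).

(* diagonal entries of A_d^n (-A)^{-alpha} *)
Definition entries_frac (gamma alpha : R) (n : nat) (k : nat) : R[i] :=
  mu gamma k ^+ n * cpow (- lam gamma k) (- alpha).

(* diagonal entries of A_d^n A^{-1} *)
Definition entries_inv (gamma : R) (n : nat) (k : nat) : R[i] :=
  mu gamma k ^+ n * (lam gamma k)^-1.

End Defs.

(* Main.v *)
Require Import Defs.
From HB Require Import structures.
From mathcomp Require Import all_boot all_order all_algebra.
From mathcomp Require Import all_classical all_reals all_analysis.
From mathcomp Require Import complex.
From mathcomp Require Import ring lra.
Import Order.TTheory GRing.Theory Num.Theory.
Import numFieldNormedType.Exports.
Local Open Scope ring_scope.

Section Helpers.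
Variable R : realType.
Local Open Scope complex_scope.

Lemma cmodE (z : R[i]) : cmod z = Normc.normc z. Proof. by case: z. Qed.
Lemma cmodM (x y : R[i]) : cmod (x * y) = cmod x * cmod y.
Proof. by rewrite !cmodE Normc.normcM. Qed.
Lemma cmodV (x : R[i]) : cmod (x^-1) = (cmod x)^-1.
Proof. by rewrite !cmodE Normc.normcV. Qed.
Lemma cmodX (x : R[i]) n : cmod (x ^+ n) = cmod x ^+ n.
Proof.
elim: n => [|n IH]; first by rewrite !expr0 cmodE Normc.normc1.
by rewrite !exprS cmodM IH.
Qed.
Lemma cmod_ge0 (x : R[i]) : 0 <= cmod x. Proof. by case: x => a b /=; exact: sqrtr_ge0. Qed.
Lemma cmod0 : cmod (0 : R[i]) = 0. Proof. by rewrite cmodE Normc.normc0. Qed.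
Lemma cmod1 : cmod (1 : R[i]) = 1. Proof. by rewrite cmodE Normc.normc1. Qed.
Lemma cmod2 (a b : R) : cmod (a +i* b) ^+ 2 = a ^+ 2 + b ^+ 2.
Proof. by rewrite /= sqr_sqrtr // addr_ge0 // sqr_ge0. Qed.
Lemma cmodC (a : R) : cmod (a%:C) = `|a|.
Proof. by rewrite /= expr0n /= addr0 sqrtr_sqr. Qed.

Local Close Scope complex_scope.
Local Open Scope ereal_scope.

Lemma l2sq_ge0 (x : nat -> R[i]) : 0 <= l2sq x.
Proof. by apply: nneseries_ge0 => k _ _; rewrite lee_fin sqr_ge0. Qed.

Lemma l2sq_single (x : nat -> R[i]) n : (forall k, k != n -> x k = 0%R) ->
  l2sq x = ((cmod (x n)) ^+ 2)%:E.
Proof.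
move=> x0; rewrite /l2sq (@nneseriesD1 R _ n xpredT) //; last by move=> k _; rewrite lee_fin sqr_ge0.
rewrite eseries0 ?adde0 // => k _ /andP[_ kn].
by rewrite x0 // cmod0 expr0n.
Qed.

Lemma l2norm_single (x : nat -> R[i]) n : (forall k, k != n -> x k = 0%R) ->
  l2norm x = (cmod (x n))%:E.
Proof.
by move=> h; rewrite /l2norm (@l2sq_single x n h) sqrtr_sqr ger0_norm // cmod_ge0.
Qed.

Lemma diag_opnorm_ge (d : nat -> R[i]) n : ((cmod (d n))%:E <= diag_opnorm d).
Proof.
apply: ereal_sup_ubound.
exists (fun k => if k == n then 1%R else 0%R : R[i]).
  rewrite /= (@l2norm_single _ n) ?eqxx ?cmod1 //.
  by move=> k /negbTE ->.
rewrite (@l2norm_single _ n) ?eqxx ?mulr1 //.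
by move=> k /negbTE ->; rewrite mulr0.
Qed.

Lemma diag_opnorm_le (d : nat -> R[i]) (B : R) : (0 <= B)%R -> (forall k, cmod (d k) <= B)%R ->
  diag_opnorm d <= B%:E.
Proof.
move=> B0 dB; apply: ge_ereal_sup => _ [x /= xn <-].
have [r xr] : exists r : R, l2sq x = r%:E.
  move: xn; rewrite /l2norm; case: (l2sq x) => // r _; by exists r.
have r0 : (0 <= r)%R by rewrite -lee_fin -xr l2sq_ge0.
have r1 : (r <= 1)%R.
  move: xn; rewrite /l2norm xr lee_fin => h.
  by rewrite -(sqr_sqrtr r0) -[1%R](expr1n _ 2%N) ler_sqr ?nnegrE ?sqrtr_ge0.
have le : l2sq (fun k => (d k * x k)%R) <= (B ^+ 2)%:E * l2sq x.
  rewrite /l2sq -nneseriesZl; last by move=> k _; rewrite lee_fin sqr_ge0.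
  apply: lee_nneseries => [k _ _|k _]; first by rewrite lee_fin sqr_ge0.
  rewrite -EFinM lee_fin cmodM exprMn ler_wpM2r ?sqr_ge0 //.
  by rewrite ler_sqr ?nnegrE ?cmod_ge0.
have [s ds] : exists s : R, l2sq (fun k => (d k * x k)%R) = s%:E.
  have := l2sq_ge0 (fun k => (d k * x k)%R); move: le; rewrite xr -EFinM.
  by case: (l2sq _) => // s _ _; exists s.
rewrite /l2norm ds lee_fin.
rewrite ds xr -EFinM lee_fin in le.
rewrite -(ger0_norm B0) -sqrtr_sqr ler_sqrt ?sqr_ge0 //.
apply: (le_trans le); rewrite -[X in (_ <= X)%R]mulr1 ler_wpM2l ?sqr_ge0 //.
Qed.

Local Close Scope ereal_scope.

Lemma pow_le_inv (q x : R) n : 0 <= q -> 0 <= x -> q = 1 - x ->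
  q ^+ n <= (1 + n%:R * x)^-1.
Proof.
move=> q0 x0 qx.
have h1 : q <= expR (- x) by rewrite qx; have := expR_ge1Dx (- x); rewrite addrC.
have h2 : q ^+ n <= expR (- x) ^+ n by apply: lerXn2r; rewrite ?nnegrE ?expR_ge0.
apply: (le_trans h2); rewrite -expRM_natl mulrN expRN.
have h3 : 1 + n%:R * x <= expR (n%:R * x) by exact: expR_ge1Dx.
have h4 : 0 < 1 + n%:R * x by rewrite ltr_pwDl // mulr_ge0.
by rewrite lef_pV2 ?posrE ?expR_gt0.
Qed.

Local Open Scope complex_scope.
Lemma lam_eq (g : R) k : lam g k = (- g) +i* k%:R.
Proof. by rewrite /lam /=; simpc. Qed.
Lemma onePlam (g : R) k : 1 + lam g k = (1 - g) +i* k%:R.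
Proof. by rewrite /lam /=; simpc. Qed.
Lemma oneMlam (g : R) k : 1 - lam g k = (1 + g) +i* (- k%:R).
Proof. by rewrite /lam /=; simpc. Qed.
Lemma Nlam (g : R) k : - lam g k = g +i* (- k%:R).
Proof. by rewrite /lam /=; simpc. Qed.

Lemma final_ineq (g K n : R) : 0 < g -> 0 <= K -> 0 < n ->
  (1 + n * (4 * g / ((1 + g) ^+ 2 + K)))^-1 / (g ^+ 2 + K) <=
  (1 + g) ^+ 2 / (4 * g ^+ 3) / n.
Proof.
move=> g0 K0 n0.
set b := (1 + g) ^+ 2 + K; set c := g ^+ 2 + K.
have b0 : 0 < b by rewrite /b ltr_wpDr // exprn_gt0 // addr_gt0.
have c0 : 0 < c by rewrite /c ltr_wpDr // exprn_gt0.
have d0 : 0 < b + 4 * g * n by rewrite ltr_wpDr // !mulr_ge0 // ltW.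
have e1 : 1 + n * (4 * g / b) = (b + 4 * g * n) / b.
  by field; rewrite gt_eqF.
rewrite e1 invf_div -subr_ge0.
have -> : (1 + g) ^+ 2 / (4 * g ^+ 3) / n - b / (b + 4 * g * n) / c =
  ((1 + g) ^+ 2 * b * c + 4 * g * n * K * (1 + 2 * g)) / (4 * g ^+ 3 * n * (b + 4 * g * n) * c).
  rewrite /b /c; field.
  by rewrite (gt_eqF c0) (gt_eqF d0) (gt_eqF n0) (gt_eqF g0).
apply: divr_ge0; last by rewrite !mulr_ge0 ?ler0n ?exprn_ge0 ?(ltW g0) ?(ltW n0) ?(ltW d0) ?(ltW c0).
have g0' := ltW g0; have n0' := ltW n0.
apply: addr_ge0.
  by apply: mulr_ge0; [apply: mulr_ge0; [exact: sqr_ge0|exact: ltW]|exact: ltW].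
apply: mulr_ge0; last by apply: addr_ge0 => //; apply: mulr_ge0.
by repeat apply: mulr_ge0.
Qed.

Lemma inv_bound (g : R) n k : 0 < g -> (1 <= n)%N ->
  cmod (entries_inv g n k) <= Num.sqrt ((1 + g) ^+ 2 / (4 * g ^+ 3)) / Num.sqrt n%:R.
Proof.
move=> g0 n1.
rewrite /entries_inv cmodM cmodX cmodV /mu cmodM cmodV onePlam oneMlam.
set A := cmod _; set B := cmod _; set C := cmod (lam g k).
have A2 : A ^+ 2 = (1 - g) ^+ 2 + k%:R ^+ 2 by rewrite /A cmod2.
have B2 : B ^+ 2 = (1 + g) ^+ 2 + k%:R ^+ 2 by rewrite /B cmod2 sqrrN.
have C2 : C ^+ 2 = g ^+ 2 + k%:R ^+ 2 by rewrite /C lam_eq cmod2 sqrrN.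
have n0 : 0 < n%:R :> R by rewrite ltr0n.
have Bp : 0 < B ^+ 2 by rewrite B2 ltr_wpDr ?sqr_ge0 // exprn_gt0 // addr_gt0.
have Cp : 0 < C ^+ 2 by rewrite C2 ltr_wpDr ?sqr_ge0 // exprn_gt0.
rewrite -ler_sqr ?nnegrE; last 2 first.
- by rewrite mulr_ge0 ?invr_ge0 ?exprn_ge0 ?mulr_ge0 ?invr_ge0 ?cmod_ge0.
- by rewrite mulr_ge0 ?invr_ge0 ?sqrtr_ge0.
rewrite exprMn exprVn [(A / B) ^+ n ^+ 2]exprAC [(A / B) ^+ 2]exprMn exprVn A2 B2 C2.
rewrite [X in _ <= X]exprMn exprVn !sqr_sqrtr ?ler0n //; last first.
  by rewrite divr_ge0 ?sqr_ge0 // mulr_ge0 // exprn_ge0 // ltW.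
set K := k%:R ^+ 2.
have K0 : 0 <= K by rewrite sqr_ge0.
apply: le_trans; last exact: (final_ineq _ _ _ g0 K0 n0).
rewrite ler_wpM2r //; first by rewrite invr_ge0 -C2 (ltW Cp).
apply: pow_le_inv.
- by apply: divr_ge0; apply: addr_ge0 => //; exact: sqr_ge0.
- apply: divr_ge0; last by apply: addr_ge0 => //; exact: sqr_ge0.
  by apply: mulr_ge0 => //; exact: ltW.
- have hb : (1 + g) ^+ 2 + K != 0 by rewrite -B2 gt_eqF.
  move: hb; rewrite /K => hb; field; exact: hb.
Qed.

Lemma cmod_cpow (z : R[i]) s : z != 0 -> cmod (cpow z s) = expR (s * ln (cmod z)).
Proof.
move=> nz; rewrite /cpow (negbTE nz) cmodM cmodC ger0_norm ?expR_ge0 //.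
have -> : (cos (s * carg z))%:C + 'i * (sin (s * carg z))%:C =
   cos (s * carg z) +i* sin (s * carg z) by simpc.
by rewrite /= cos2Dsin2 sqrtr1 mulr1.
Qed.

Lemma mu_pow_ge (g : R) n : 0 < g -> (1 <= n)%N ->
  expR (- (2 * g)) <= cmod (mu g n) ^+ (n ^ 2).
Proof.
move=> g0 n1.
rewrite /mu cmodM cmodV onePlam oneMlam.
set A := cmod _; set B := cmod _.
have A2 : A ^+ 2 = (1 - g) ^+ 2 + n%:R ^+ 2 by rewrite /A cmod2.
have B2 : B ^+ 2 = (1 + g) ^+ 2 + n%:R ^+ 2 by rewrite /B cmod2 sqrrN.
set m := (n%:R : R) ^+ 2.
have m0 : 0 < m by rewrite /m exprn_gt0 // ltr0n.
have a0 : 0 < (1 - g) ^+ 2 + m by rewrite ltr_wpDl // sqr_ge0.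
have b0 : 0 < (1 + g) ^+ 2 + m by rewrite ltr_wpDl // sqr_ge0.
rewrite -ler_sqr ?nnegrE ?expR_ge0 //; last first.
  by rewrite exprn_ge0 // divr_ge0 // cmod_ge0.
rewrite -expRM_natr exprAC [(A / B) ^+ 2]exprMn exprVn A2 B2 -/m.
set a := (1 - g) ^+ 2 + m; set b := (1 + g) ^+ 2 + m.
have ba : b / a = 1 + 4 * g / a.
  rewrite /a /b; field; by rewrite -/m -/a gt_eqF.
have key : (b / a) ^+ (n ^ 2) <= expR (4 * g).
  have h1 : b / a <= expR (4 * g / a) by rewrite ba; exact: expR_ge1Dx.
  have h2 : (b / a) ^+ (n ^ 2) <= expR (4 * g / a) ^+ (n ^ 2).
    by apply: lerXn2r; rewrite ?nnegrE ?expR_ge0 // divr_ge0 // ltW.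
  apply: (le_trans h2); rewrite -expRM_natr ler_expR natrX -/m.
  rewrite mulrAC ler_pdivrMr // ler_wpM2l ?mulr_ge0 ?ler0n ?(ltW g0) //.
  by rewrite /a lerDr sqr_ge0.
have -> : a / b = (b / a)^-1 by rewrite invf_div.
rewrite exprVn.
have -> : - (2 * g) * 2%:R = - (4 * g) by ring.
rewrite expRN lef_pV2 ?posrE ?expR_gt0 //.
by rewrite exprn_gt0 // divr_gt0.
Qed.

Lemma pow_lam_ge (g al : R) n : 0 < g -> 0 < al -> al <= 1 -> (1 <= n)%N ->
  1 - g ^+ 2 / n%:R <= n%:R `^ al * expR (- al * ln (cmod (- lam g n))).
Proof.
move=> g0 al0 al1 n1.
set m : R := n%:R.
have m0 : 0 < m by rewrite /m ltr0n.
have m1 : 1 <= m by rewrite /m ler1n.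
set c := cmod (- lam g n).
have c2 : c ^+ 2 = g ^+ 2 + m ^+ 2 by rewrite /c Nlam cmod2 sqrrN.
have c0 : 0 <= c by rewrite /c cmod_ge0.
have mc : m <= c.
  by rewrite -ler_sqr ?nnegrE ?(ltW m0) // c2 lerDr sqr_ge0.
have cm : c <= m + g ^+ 2.
  rewrite -ler_sqr ?nnegrE // ?addr_ge0 ?sqr_ge0 ?(ltW m0) // c2.
  have g2 : 0 <= g ^+ 2 by rewrite sqr_ge0.
  nra.
have cpos : 0 < c by apply: lt_le_trans mc.
rewrite /powR (gt_eqF m0) -expRD.
apply: le_trans (expR_ge1Dx _).
rewrite lerD2l mulNr -mulrBr.
have hl : ln c - ln m = ln (c / m).
  by rewrite lnM ?posrE ?invr_gt0 // lnV ?posrE.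
have hl0 : 0 <= ln c - ln m by rewrite subr_ge0 ler_ln ?posrE.
rewrite -opprB mulrN lerN2.
apply: (le_trans (y := ln c - ln m)).
  by rewrite -[X in _ <= X]mul1r ler_wpM2r.
rewrite hl.
have -> : c / m = 1 + (c / m - 1) by rewrite addrC subrK.
apply: le_trans (le_ln1Dx _) _.
  by rewrite ltrBrDl subrr divr_gt0.
rewrite lerBlDr ler_pdivrMr // mulrDl mul1r divfK ?gt_eqF //.
rewrite addrC (le_trans cm) // lerD2l ler_peMr ?sqr_ge0 //.
Qed.

Lemma liminf_mono (u v : (\bar R)^nat) :
  (forall n, (1 <= n)%N -> (v n <= u n)%E) -> (limn_einf v <= limn_einf u)%E.
Proof.
move=> vu; rewrite !limn_einf_lim; apply: lee_lim; [exact: is_cvg_einfs|exact: is_cvg_einfs|].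
near=> n; apply: le_ereal_inf_tmp => _ [m /= nm <-].
apply: (@le_trans _ _ (v m)); first by apply: ereal_inf_lbound; exists m.
apply: vu; apply: leq_trans nm; near: n; exists 1%N => //.
Unshelve. all: by end_near. Qed.

Lemma Nlam_neq0 (g : R) n : 0 < g -> - lam g n != 0.
Proof. by move=> g0; rewrite Nlam eq_complex /= negb_and gt_eqF. Qed.

Lemma harm_ineq (g : R) n : (1 <= n)%N ->
  1 - 2 * g ^+ 2 * harmonic n <= 1 - g ^+ 2 / n%:R.
Proof.
move=> n1; rewrite lerD2l lerN2 /harmonic /= -[n.+1]addn1 natrD -subr_ge0.
have n0 : 0 < n%:R :> R by rewrite ltr0n.
have -> : 2 * g ^+ 2 * (n%:R + 1)^-1 - g ^+ 2 / n%:R =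
   g ^+ 2 * (n%:R - 1) / (n%:R * (n%:R + 1)) :> R.
  have n10 : 0 < n%:R + 1 :> R by rewrite ltr_wpDl // ltW.
  by field; rewrite !gt_eqF.
apply: divr_ge0; last by apply: mulr_ge0; apply: ltW.
by apply: mulr_ge0; rewrite ?sqr_ge0 // subr_ge0 ler1n.
Qed.

Lemma part1_pt (g al : R) n : 0 < g -> 0 < al -> al <= 1 -> (1 <= n)%N ->
  ((expR (- (2 * g)) * (1 - 2 * g ^+ 2 * harmonic n))%:E <=
   (n%:R `^ al)%:E * diag_opnorm (entries_frac g al (n ^ 2)))%E.
Proof.
move=> g0 al0 al1 n1.
apply: (@le_trans _ _ ((n%:R `^ al * cmod (entries_frac g al (n ^ 2) n))%:E)).
  rewrite lee_fin /entries_frac cmodM cmodX cmod_cpow ?Nlam_neq0 // [X in _ <= X]mulrCA.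
  set Y := _ * expR _.
  have Y0 : 0 <= Y by rewrite /Y mulr_ge0 ?powR_ge0 ?expR_ge0.
  apply: (@le_trans _ _ (expR (- (2 * g)) * Y)); last first.
    by rewrite ler_wpM2r // mu_pow_ge.
  rewrite ler_wpM2l ?expR_ge0 //.
  apply: le_trans (@harm_ineq g n n1) _.
  by rewrite /Y; apply: pow_lam_ge.
rewrite EFinM; apply: lee_pmul; rewrite ?lee_fin ?powR_ge0 ?cmod_ge0 //.
exact: diag_opnorm_ge.
Qed.

End Helpers.
Local Close Scope complex_scope.

Theorem mainTheorem9 (R : realType) (gamma : R) (hgamma : 0 < gamma) :
  (forall alpha : R, 0 < alpha -> alpha <= 1 ->
     (limn_einf (fun n : nat =>
        ((n%:R `^ alpha)%:E * diag_opnorm (entries_frac gamma alpha (n ^ 2)))%E)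
      >= (expR (- (2 * gamma)))%:E)%E) /\
  (exists (M : R) (n0 : nat), 0 < M /\
     forall n : nat, (n0 <= n)%N ->
       (diag_opnorm (entries_inv gamma n) <= (M / Num.sqrt n%:R)%:E)%E).
Proof.
split.
- move=> al al0 al1.
  set E := expR (- (2 * gamma)).
  pose v := fun n : nat => (E * (1 - 2 * gamma ^+ 2 * harmonic n))%:E.
  have cv : (v @ \oo --> E%:E)%classic.
    apply/fine_cvgP; split; first by near=> n.
    have h := cvgM (cvg_cst E) (cvgB (cvg_cst (1 : R)) (cvgM (cvg_cst (2 * gamma ^+ 2)) (@cvg_harmonic R))).
    rewrite mulr0 subr0 mulr1 in h; exact: h.
  have [<- _] := cvg_limn_einf_sup cv.
  apply: liminf_mono => n n1.
  exact: part1_pt.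
- exists (Num.sqrt ((1 + gamma) ^+ 2 / (4 * gamma ^+ 3))), 1%N; split.
    by rewrite sqrtr_gt0 divr_gt0 ?exprn_gt0 ?mulr_gt0 ?addr_gt0 ?ltr0n.
  move=> n n1; apply: diag_opnorm_le.
    by rewrite divr_ge0 ?sqrtr_ge0.
  by move=> k; apply: inv_bound.
Unshelve. all: by end_near. Qed.
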